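(* Let $\beta\in(0,1)$, $c>1-\beta$ and $\delta\in[0,1)$, and set $$E_N=\Big\{\sum_{i=\lceil N^\delta\rceil}^{N} w_i^\beta\le c^{-1}N^{1-\beta}\Big\}.$$ Then for every $\eta>0$, $\mathbb P(E_N)=o(N^{-\eta})$ as $N\to\infty$.
   Context: $\Xi$ is a Poisson point process on $(0,\infty)$ with intensity measure $x^{-2}dx$, and $w_1>w_2>\cdots$ are its atoms listed in decreasing order. *)

(* Defs.v *)
From HB Require Import structures.
From mathcomp Require Import all_boot all_order all_algebra.
From mathcomp Require Import all_classical all_reals all_analysis.
Set Implicit Arguments. Unset Strict Implicit. Unset Printing Implicit Defensive.
Import Order.TTheory GRing.Theory Num.Theory Num.Def.
Import numFieldNormedType.Exports.
Local Open Scope classical_set_scope.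
Local Open Scope ring_scope.

(* Poisson probability mass function with mean m >= 0
   (the convention 0^0 = 1 gives the Dirac mass at 0 when m = 0). *)
Definition pois_pmf {R : realType} (m : R) (n : nat) : R :=
  expR (- m) * m ^+ n / n`!%:R.

Definition intensity {R : realType} (A : set R) : \bar R :=
  (\int[@lebesgue_measure R]_(x in A `&` [set x : R | (0 < x)%R]) ((x ^-2)%R)%:E)%E.

Definition npoints {R : realType} (w : nat -> R) (A : set R) : \bar R :=
  (\sum_(0 <= i <oo) ((\1_A (w i))%R)%:E)%E.

(* The random sequence w (w i : T -> R) enumerates, in strictly decreasing
   order, the atoms of a Poisson point process on (0,oo) with intensity
   measure x^{-2} dx: each w i is a positive random variable, the sequence is
   strictly decreasing, and the counting process A |-> #{i | w i in A} is a
   Poisson point process with that intensity: for pairwise disjoint Borel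
   sets A_0..A_{k-1} in (0,oo) of finite intensity, the counts are
   independent Poisson variables with means intensity(A_j). *)
Definition ppp_atoms_decreasing {d} {T : measurableType d} {R : realType}
    (P : probability T R) (w : nat -> T -> R) : Prop :=
  [/\ (forall i, measurable_fun setT (w i)),
      (forall i t, 0 < w i t),
      (forall i t, w i.+1 t < w i t) &
      (forall (k : nat) (A : 'I_k -> set R),
         (forall j, measurable (A j)) ->
         (forall j, A j `<=` [set x : R | (0 < x)%R]) ->
         (forall j j', j != j' -> A j `&` A j' = set0) ->
         (forall j, (intensity (A j) < +oo)%E) ->
         forall n : 'I_k -> nat,
           P [set t | forall j, npoints (w ^~ t) (A j) = (n j)%:R%:E]
           = (\prod_(j < k) pois_pmf (fine (intensity (A j))) (n j))%:E)].

(* paper indexing: w_1 > w_2 > ... is  atom w 1, atom w 2, ... *)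
Definition atom {T R : Type} (w : nat -> T -> R) (i : nat) : T -> R := w i.-1.

Definition event_E {T : Type} {R : realType} (w : nat -> T -> R)
    (beta c delta : R) (N : nat) : set T :=
  [set t | \sum_(`|ceil ((N%:R : R) `^ delta)|%N <= i < N.+1)
              (atom w i t) `^ beta
           <= c^-1 * (N%:R : R) `^ (1 - beta)].

(* Main.v *)
Require Import Defs.
From HB Require Import structures.
From mathcomp Require Import all_boot all_order all_algebra.
From mathcomp Require Import all_classical all_reals all_analysis.
From mathcomp Require Import ring lra zify measurable_realfun.
Import Order.TTheory GRing.Theory Num.Theory Num.Def.
Import numFieldNormedType.Exports.
Local Open Scope classical_set_scope.
Local Open Scope ring_scope.
Section S.
Variable R : realType.
Local Notation mu := (@lebesgue_measure R).

Lemma F'f (x y : R) : 0 < x -> {in `]x, y[, (fun t : R => - t^-1)^`()%classic =1 (fun t => t ^- 2)}.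
Proof.
  move=> x0 t; rewrite in_itv /= => /andP[xt _].
  have t0 : t != 0 by rewrite gt_eqF // (lt_trans x0).
  rewrite derive1E deriveN; last exact: derivableV.
  by rewrite deriveV // derive_id scaler1 opprK.
Qed.

Lemma dF (t : R) : 0 < t -> derivable (fun t : R => - t^-1) t 1.
Proof. move=> t0; apply: derivableN; apply: derivableV => //; by rewrite gt_eqF. Qed.

Lemma cf (x y : R) : 0 < x -> {within `[x, y], continuous (fun t : R => t ^- 2)}.
Proof.
move=> x0; apply/continuous_in_subspaceT => t; rewrite inE /= in_itv /= => /andP[xt _].
apply: (@continuousV _ _ (fun t : R => t ^+ 2)).
  by rewrite expf_neq0 // gt_eqF // (lt_le_trans x0).
exact: exprn_continuous.
Qed.

Lemma dFc (x y : R) : 0 < x -> x < y -> derivable_oo_LRcontinuous (fun t : R => - t^-1) x y.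
Proof.
move=> x0 xy; split.
  + move=> t; rewrite in_itv /= => /andP[xt _]; apply: dF; exact: lt_trans xt.
  + apply: cvg_at_right_filter.
    by have /derivable1_diffP/differentiable_continuous := dF x x0.
  + apply: cvg_at_left_filter.
    by have /derivable1_diffP/differentiable_continuous := dF y (lt_trans x0 xy).
Qed.

Lemma intensity_itv (x y : R) : 0 < x -> x < y ->
  intensity [set` `[x, y]] = (x^-1 - y^-1)%:E.
Proof.
move=> x0 xy.
rewrite /intensity.
have -> : [set` `[x, y]] `&` [set t : R | 0 < t] = [set` `[x, y]].
  apply/seteqP; split => t /=; first by case.
  move=> ht; split => //; move: ht; rewrite /= in_itv /= => /andP[+ _].
  by apply: lt_le_trans.
have H := @continuous_FTC2 R (fun t => t ^- 2) (fun t => - t^-1) x y xy (cf x y x0) (dFc x y x0 xy) (F'f x y x0).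
rewrite H /= opprK addrC //.
Qed.
End S.
Section S.
Variable R : realType.

Lemma psum_le_expR (z : R) (m : nat) : 0 <= z ->
  \sum_(n < m) z ^+ n / n`!%:R <= expR z.
Proof.
move=> z0.
have nd : nondecreasing_seq (series (exp_coeff z)).
  rewrite seriesEnat; apply: (@nondecreasing_series R _ xpredT 0) => n _ _.
  by rewrite /exp_coeff /= divr_ge0 // exprn_ge0.
have := nondecreasing_cvgn_le nd (is_cvg_series_exp_coeff z) m.
move=> H; apply: (le_trans _ (le_trans H _)).
  by rewrite seriesEord.
by [].
Qed.

Lemma pois_tail (lam eps : R) (m : nat) : 0 <= lam -> 0 < eps ->
  \sum_(n < m) pois_pmf lam n <= expR (eps * m%:R - eps * lam / (1 + eps)).
Proof.
move=> l0 e0.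
have e1 : 0 < 1 + eps by rewrite addr_gt0.
pose th := (1 + eps)^-1.
have th0 : 0 <= th by rewrite invr_ge0 ltW.
have key : \sum_(n < m) lam ^+ n / n`!%:R <= (1 + eps) ^+ m * expR (lam * th).
  apply: le_trans; last first.
    apply: ler_wpM2l; first by rewrite exprn_ge0 // ltW.
    exact: (@psum_le_expR (lam * th) m (mulr_ge0 l0 th0) : _ <= expR (lam * th)).
  rewrite mulr_sumr; apply: ler_sum => n _.
  have -> : lam ^+ n = (1 + eps) ^+ n * (lam * th) ^+ n.
    by rewrite -exprMn mulrCA /th mulfV ?gt_eqF // mulr1.
  rewrite -mulrA; apply: ler_wpM2r; first by rewrite divr_ge0 // exprn_ge0 // mulr_ge0.
  apply: ler_weXn2l; first by rewrite lerDl ltW.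
  exact: ltnW (ltn_ord n).
rewrite /pois_pmf.
under eq_bigr do rewrite -mulrA.
rewrite -mulr_sumr.
apply: le_trans (ler_wpM2l (expR_ge0 _) key) _.
have h1 : (1 + eps) ^+ m <= expR (eps * m%:R).
  rewrite expRM_natr; apply: lerXn2r; last exact: expR_ge1Dx.
    by rewrite nnegrE ltW.
  by rewrite nnegrE expR_ge0.
apply: le_trans (_ : expR (- lam) * (expR (eps * m%:R) * expR (lam * th)) <= _).
  by rewrite ler_wpM2l ?expR_ge0 // ler_wpM2r ?expR_ge0.
rewrite -!expRD; rewrite le_eqVlt; apply/orP; left; apply/eqP; congr expR.
rewrite /th; field.
by rewrite gt_eqF.
Qed.

End S.
Section S.
Variable R : realType.
Local Open Scope ereal_scope.

Lemma fin_ind_sum (A : set R) (f : nat -> R) (k : nat) :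
  exists2 n : nat, (n <= k)%N &
    \sum_(0 <= j < k) ((\1_A (f j) : R)%R)%:E = ((n%:R : R))%:E.
Proof.
elim: k => [|k [n nk IH]]; first by exists 0%N; rewrite // big_geq.
rewrite big_nat_recr //= IH indicE.
exists (n + (f k \in A))%N.
  by case: (f k \in A); rewrite ?addn1 ?addn0 ?ltnS // (leq_trans nk).
by rewrite -EFinD natrD.
Qed.

Lemma npoints_small (A : set R) (w : nat -> R) (x : R) (k : nat) :
  (forall i, (w i.+1 < w i)%R) -> A `<=` [set u | (x <= u)%R] -> (w k < x)%R ->
  exists2 n : nat, (n <= k)%N & npoints w A = ((n%:R : R))%:E.
Proof.
move=> dec Ax wk.
have mono : forall j, (k <= j)%N -> (w j <= w k)%R.
  move=> j /subnK <-; elim: (j - k)%N => [|d IH]; first by rewrite add0n.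
  by rewrite addSn (le_trans _ IH) // ltW.
have [n nk Hn] := fin_ind_sum A w k.
exists n => //; rewrite /npoints -Hn.
apply: lim_near_cst => //; near=> m.
have km : (k <= m)%N by near: m; exists k.
rewrite (@big_cat_nat _ _ _ k 0 m) /= ?leq0n // [X in _ + X]big_nat_cond [X in _ + X]big1 ?adde0 //.
move=> j /andP[/andP[kj _] _]; rewrite indicE.
suff -> : (w j \in A) = false by [].
apply/negbTE/negP; rewrite inE => /Ax /=; apply/negP; rewrite -ltNge.
exact: le_lt_trans (mono j kj) wk.
Unshelve. all: by end_near.
Qed.
End S.
Section S.
Context (d : measure_display) (T : measurableType d) (R : realType).
Local Open Scope ereal_scope.

Lemma npoints_measurable (w : nat -> T -> R) (A : set R) :
  (forall i, measurable_fun setT (w i)) -> measurable A ->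
  measurable_fun setT (fun t => npoints (w ^~ t) A).
Proof.
move=> mw mA; rewrite /npoints.
have := @ge0_emeasurable_sum d T R setT (fun i t => ((\1_A (w i t) : R))%:E) xpredT.
apply.
  by move=> k t _ _; rewrite lee_fin indicE ler0n.
move=> k _; apply/measurable_EFinP.
apply: (@measurableT_comp _ _ _ _ _ _ (\1_A : R -> R)) => //.
Qed.

Lemma count_set_measurable (w : nat -> T -> R) (A : set R) (c : \bar R) :
  (forall i, measurable_fun setT (w i)) -> measurable A ->
  measurable [set t | forall j : 'I_1, npoints (w ^~ t) A = c].
Proof.
move=> mw mA.
have -> : [set t | forall j : 'I_1, npoints (w ^~ t) A = c] =
   setT `&` (fun t => npoints (w ^~ t) A) @^-1` [set c].
  apply/seteqP; split => t /=; first by move=> /(_ ord0).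
  by move=> [_ ->].
exact: npoints_measurable.
Qed.
End S.
Section S5.
Context (d : measure_display) (T : measurableType d) (R : realType).

Lemma per_index (P : probability T R) (w : nat -> T -> R) (eps : R) (k : nat) :
  ppp_atoms_decreasing P w -> 0 < eps ->
  (P [set t | (w k t < ((1 + eps) ^+ 2 + eps)^-1 / k.+1%:R)%R]
    <= (expR (- (eps ^+ 2 * k.+1%:R)))%:E)%E.
Proof.
move=> [mw wpos wdec hP] e0.
set al := (1 + eps) ^+ 2 + eps.
have al0 : 0 < al by rewrite /al addr_gt0 // exprn_gt0 // addr_gt0.
have k0 : 0 < k.+1%:R :> R by rewrite ltr0n.
set x := al^-1 / k.+1%:R.
set y := eps^-1 / k.+1%:R.
have x0 : 0 < x by rewrite /x divr_gt0 // invr_gt0.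
have xy : x < y.
  rewrite /x /y ltr_pM2r ?invr_gt0 // ltf_pV2 ?posrE //.
  by rewrite /al ltrDr exprn_gt0 // addr_gt0.
set A := [set` `[x, y]].
have mA : measurable A by exact: measurable_itv.
have Apos : A `<=` [set u : R | 0 < u].
  by move=> u; rewrite /A /= in_itv /= => /andP[+ _]; exact: lt_le_trans.
have Aint : (intensity A < +oo)%E by rewrite intensity_itv // ltry.
have fl : fine (intensity A) = x^-1 - y^-1 by rewrite intensity_itv.
pose C n := [set t | forall j : 'I_1, npoints (w ^~ t) ((fun=> A) j) = ((((fun=> n) j)%:R : R))%:E].
have hC n : P (C n) = (pois_pmf (x^-1 - y^-1) n)%:E.
  have := hP 1%N (fun=> A) (fun=> mA) (fun=> Apos) _ (fun=> Aint) (fun=> n).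
  rewrite big_ord1 fl; apply.
  by move=> j j'; rewrite !ord1.
have mC n : measurable (C n) by exact: count_set_measurable.
have mB : measurable [set t | w k t < x].
  have -> : [set t | w k t < x] = setT `&` (w k) @^-1` [set` `]-oo, x[].
    by apply/seteqP; split => t /=; rewrite in_itv /= ?andbT //; move=> [].
  apply: (mw k) => //; exact: measurable_itv.
have sub : [set t | w k t < x] `<=` \big[setU/set0]_(n < k.+1) C n.
  move=> t /= wkt.
  have Ax : A `<=` [set u | x <= u] by move=> u; rewrite /A /= in_itv /= => /andP[].
  have [n nk Hn] := @npoints_small R A (w ^~ t) x k (fun i => wdec i t) Ax wkt.
  rewrite -bigcup_mkord; exists n; first by [].
  by move=> j.
have := @content_subadditive _ _ _ P _ C k.+1 (fun n _ => mC n) mB sub.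
move=> H; apply: le_trans H _.
rewrite (eq_bigr (fun n : 'I_k.+1 => (pois_pmf (x^-1 - y^-1) n)%:E)); last by move=> n _; exact: hC.
rewrite sumEFin lee_fin.
have lamE : x^-1 - y^-1 = (1 + eps) ^+ 2 * k.+1%:R.
  rewrite /x /y !invfM !invrK /al; ring.
have lam0 : 0 <= x^-1 - y^-1 by rewrite lamE mulr_ge0 // ?exprn_ge0 // ltW // addr_gt0.
apply: le_trans (@pois_tail R _ _ k.+1 lam0 e0) _.
rewrite lamE le_eqVlt; apply/orP; left; apply/eqP; congr expR.
field; rewrite gt_eqF // addr_gt0 //.
Qed.
End S5.
Section S6.
Variable R : realType.

Lemma bern (u s : R) : 0 < u -> 0 < s -> s < 1 ->
  (u + 1) `^ s <= u `^ s + s * u `^ (s - 1).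
Proof.
move=> u0 s0 s1.
have s1' : 0 < 1 - s by rewrite subr_gt0.
have si : 0 < s^-1 by rewrite invr_gt0.
have si' : 0 < (1 - s)^-1 by rewrite invr_gt0.
have := @conjugate_powR R (((u + 1) / u) `^ s) 1 s^-1 (1 - s)^-1
  (powR_ge0 _ _) ler01 si si'.
move=> H0; have := H0 (etrans (congr2 _ (invrK s) (invrK (1 - s))) (subrKC s 1)).
have e1 : (((u + 1) / u) `^ s) `^ s^-1 = (u + 1) / u.
  rewrite -powRrM mulfV; last by rewrite gt_eqF.
  by apply: powRr1; rewrite divr_ge0 // ltW // addr_gt0.
rewrite mulr1 e1 powR1 invrK invrK mul1r => H.
have ue : (u + 1) `^ s = ((u + 1) / u) `^ s * u `^ s.
  by rewrite -powRM ?divr_ge0 ?ltW ?addr_gt0 // divfK ?gt_eqF.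
rewrite ue.
have -> : u `^ (s - 1) = u `^ s / u.
  rewrite powRB; last by apply/implyP => _; rewrite gt_eqF.
  congr (_ * _^-1); apply: powRr1; exact: ltW.
apply: le_trans (ler_wpM2r (powR_ge0 _ _) H) _.
rewrite le_eqVlt; apply/orP; left; apply/eqP.
field; by rewrite gt_eqF.
Qed.
End S6.
Section S7.
Variable R : realType.

Lemma powRV' (a x : R) : 0 < a -> (a^-1) `^ x = a `^ (- x).
Proof.
move=> a0; rewrite /powR !gt_eqF ?invr_gt0 // lnV ?posrE //.
by rewrite mulrN mulNr.
Qed.

Lemma tele (L N : nat) (s : R) : (0 < L)%N -> (L <= N.+1)%N -> 0 < s -> s < 1 ->
  N.+1%:R `^ s - L%:R `^ s <= s * \sum_(L <= i < N.+1) i%:R `^ (s - 1).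
Proof.
move=> L0 LN s0 s1.
rewrite -(telescope_sumr (fun i => i%:R `^ s) LN) mulr_sumr.
apply: ler_sum_nat => i /andP[Li _].
have i0 : 0 < i%:R :> R by rewrite ltr0n (leq_trans L0).
rewrite lerBlDl -natr1.
exact: bern.
Qed.

Lemma det_bound (beta al : R) (L N : nat) (v : nat -> R) :
  0 < beta -> beta < 1 -> 1 <= al -> (0 < L)%N -> (L <= N.+1)%N ->
  (forall i, (L <= i)%N -> (i <= N)%N -> al^-1 / i%:R <= v i) ->
  al^-1 / (1 - beta) * (N.+1%:R `^ (1 - beta) - L%:R `^ (1 - beta))
    <= \sum_(L <= i < N.+1) v i `^ beta.
Proof.
move=> b0 b1 al1 L0 LN hv.
have s0 : 0 < 1 - beta by rewrite subr_gt0.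
have al0 : 0 < al by apply: lt_le_trans al1.
apply: le_trans (_ : al^-1 / (1 - beta) * ((1 - beta) * \sum_(L <= i < N.+1) i%:R `^ (- beta)) <= _).
  apply: ler_wpM2l; first by rewrite divr_ge0 // ?invr_ge0 ltW.
  have := @tele L N (1 - beta) L0 LN s0 _.
  have -> : 1 - beta - 1 = - beta by ring.
  apply; rewrite ltrBlDr ltrDl //.
rewrite [X in X <= _](_ : _ = al^-1 * \sum_(L <= i < N.+1) i%:R `^ (- beta)); last by field; rewrite ?gt_eqF // ?al0 //.
rewrite mulr_sumr.
apply: ler_sum_nat => i /andP[Li iN].
have i0 : 0 < i%:R :> R by rewrite ltr0n (leq_trans L0).
apply: le_trans (_ : (al^-1 / i%:R) `^ beta <= _); last first.
  have hvi : al^-1 / i%:R <= v i by apply: hv => //; rewrite -ltnS.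
  have g0 : 0 <= al^-1 / i%:R by rewrite divr_ge0 // ltW // invr_gt0.
  apply: ge0_ler_powR => //; first exact: ltW.
  by rewrite nnegrE (le_trans g0).
rewrite powRM; last 2 first.
- by rewrite invr_ge0 ltW.
- by rewrite invr_ge0 ltW.
rewrite -(powRV' _ beta i0); apply: ler_wpM2r; first exact: powR_ge0.
apply: ger1_powR; last exact: ltW.
by rewrite invr_gt0 al0 invf_le1.
Qed.
End S7.
Section S8.
Context (d : measure_display) (T : measurableType d) (R : realType).

Lemma event_E_meas (w : nat -> T -> R) (beta c delta : R) (N : nat) :
  (forall i, measurable_fun setT (w i)) -> measurable (event_E w beta c delta N).
Proof.
move=> mw; rewrite /event_E.
set r := c^-1 * _.
set a := `|ceil _|%N.
have -> : [set t | \sum_(a <= i < N.+1) atom w i t `^ beta <= r] =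
  setT `&` (fun t => \sum_(i <- index_iota a N.+1) atom w i t `^ beta) @^-1` [set` `]-oo, r]].
  by apply/seteqP; split => t /=; rewrite in_itv /= ?andbT //; move=> [].
have mf : measurable_fun setT (fun t => \sum_(i <- index_iota a N.+1) atom w i t `^ beta).
  apply: measurable_sum => i.
  exact: (measurableT_comp (measurable_powR beta) (mw i.-1)).
exact: mf measurableT _ (measurable_itv _).
Qed.
End S8.
Section S9.
Variable R : realType.

Lemma ceilnP (x : R) : 0 <= x ->
  x <= (`|ceil x|%N)%:R /\ (`|ceil x|%N)%:R < x + 1.
Proof.
move=> x0; rewrite natr_absz ger0_norm; last by rewrite ceil_ge0 (lt_le_trans _ x0) // ltrN10.
have /andP[h1 h2] := ceil_itv x; split => //.
by rewrite -ltrBlDr -[1]/(1%:~R) -intrB.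
Qed.

Lemma ceiln_le (x y : R) : 0 <= x -> x <= y -> (`|ceil x| <= `|ceil y|)%N.
Proof.
move=> x0 xy; rewrite -(ler_nat R) !natr_absz !ger0_norm.
- by rewrite ler_int le_ceil.
- by rewrite ceil_ge0 (lt_le_trans _ (le_trans x0 xy)) // ltrN10.
- by rewrite ceil_ge0 (lt_le_trans _ x0) // ltrN10.
Qed.
End S9.
Section S10.
Variable R : realType.

Lemma key_real (beta c delta gam eps : R) :
  0 < beta -> beta < 1 -> 0 < c -> 0 <= delta -> delta <= gam -> gam < 1 -> 0 < eps ->
  4 * eps <= 1 - ((1 + eps) ^+ 2 + eps) * ((1 - beta) / c) ->
  \forall N \near \oo,
    [/\ (0 < `|ceil ((N%:R : R) `^ gam)|)%N,
        (`|ceil ((N%:R : R) `^ delta)| <= `|ceil ((N%:R : R) `^ gam)|)%N,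
        (`|ceil ((N%:R : R) `^ gam)| <= N)%N &
       c^-1 * (N%:R : R) `^ (1 - beta) <
         ((1 + eps) ^+ 2 + eps)^-1 / (1 - beta) *
           (N.+1%:R `^ (1 - beta) - (`|ceil ((N%:R : R) `^ gam)|%N)%:R `^ (1 - beta))].
Proof.
move=> b0 b1 c0 d0 dg g1 e0 hq.
set s := 1 - beta.
have s0 : 0 < s by rewrite subr_gt0.
set al := (1 + eps) ^+ 2 + eps.
have al0 : 0 < al by rewrite addr_gt0 // exprn_gt0 // addr_gt0.
set r := (1 - gam) * s.
have r0 : 0 < r by rewrite mulr_gt0 // subr_gt0.
set M := (eps^-1) `^ (r^-1).
near=> N.
have N1 : 1 <= (N%:R : R) by rewrite ler1n; near: N; exact: nbhs_infty_gt.
have NM : M <= N%:R by near: N; exact: nbhs_infty_ger.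
set n := (N%:R : R) in N1 NM *.
have n0 : 0 < n by apply: lt_le_trans N1.
have g0 : 0 <= gam by apply: le_trans dg.
set x := n `^ gam.
have x1 : 1 <= x by rewrite /x -(powRr0 n) ler_powR.
have [Lx Lx1] := @ceilnP R x (le_trans ler01 x1).
set L := `|ceil x|%N in Lx Lx1 *.
have L0 : (0 < L)%N by rewrite -(ltr0n R) (lt_le_trans _ Lx) // (lt_le_trans ltr01).
have aL : (`|ceil (n `^ delta)| <= L)%N.
  by apply: ceiln_le; [exact: powR_ge0 | rewrite /x ler_powR].
set A := n `^ (gam * s).
set B := n `^ r.
have A0 : 0 < A by rewrite powR_gt0.
have nAB : n `^ s = A * B.
  rewrite /A /B -powRD; last by apply/implyP => _; rewrite gt_eqF.
  by congr (_ `^ _); rewrite /r; ring.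
have Be : eps^-1 <= B.
  have -> : eps^-1 = M `^ r.
    by rewrite /M -powRrM mulVf ?gt_eqF //; apply/esym/powRr1; rewrite invr_ge0 ltW.
  apply: ge0_ler_powR => //; first exact: ltW.
    by rewrite nnegrE powR_ge0.
  by rewrite nnegrE ltW.
have Ls : L%:R `^ s <= 2 * A.
  apply: le_trans (_ : (2 * x) `^ s <= _).
    apply: ge0_ler_powR; rewrite ?nnegrE //; first exact: ltW.
      by rewrite mulr_ge0 // (le_trans ler01 x1).
    by rewrite mulr2n mulrDl mul1r (le_trans (ltW Lx1)) // lerD2l.
  rewrite powRM //; last by rewrite (le_trans ler01 x1).
  rewrite /x -powRrM; apply: ler_wpM2r; first exact: powR_ge0.
  apply: ler1_powR; first by rewrite ler1n.
  by rewrite lerBlDr lerDl ltW.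
set P := A * B in nAB.
set K := al * (s / c).
have K0 : 0 <= K by rewrite /K mulr_ge0 ?divr_ge0 // ltW.
have P0 : 0 <= P by rewrite /P mulr_ge0 // ?(ltW A0) // (le_trans _ Be) // invr_ge0 ltW.
have eB : 1 <= eps * B.
  have en : eps != 0 by rewrite gt_eqF.
  by rewrite -(mulfV en) ler_wpM2l // ltW.
have h4 : 4 * A <= (1 - K) * P.
  have h1 : 4 * eps * P <= (1 - K) * P by rewrite ler_wpM2r.
  apply: le_trans h1; rewrite /P.
  have : 4 * A * 1 <= 4 * A * (eps * B) by rewrite ler_wpM2l // mulr_ge0 // ltW.
  by rewrite mulr1 => /le_trans; apply; rewrite le_eqVlt; apply/orP; left; apply/eqP; ring.
have N1s : P <= N.+1%:R `^ s.
  rewrite -nAB; apply: ge0_ler_powR; rewrite ?nnegrE ?ltW //.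
  by rewrite /n ltr_nat.
have LP : L%:R `^ s < P by nra.
split => //.
  have : L%:R < n.
    rewrite ltNge; apply/negP => h.
    have hn : n \is Num.nneg by rewrite nnegrE ltW.
    have hL : (L%:R : R) \is Num.nneg by rewrite nnegrE ler0n.
    have := ge0_ler_powR (ltW s0) hn hL h.
    by rewrite nAB leNgt LP.
  by rewrite ltr_nat => /ltnW.
have hK : K * P < N.+1%:R `^ s - L%:R `^ s by nra.
rewrite nAB (_ : c^-1 * P = (al * s)^-1 * (K * P)); last first.
  by rewrite /K; field; rewrite !gt_eqF.
rewrite (_ : al^-1 / s = (al * s)^-1); last by field; rewrite !gt_eqF.
by rewrite ltr_pM2l // invr_gt0 mulr_gt0.
Unshelve. all: by end_near.
Qed.
End S10.
Section S11.
Context (d : measure_display) (T : measurableType d) (R : realType).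

Lemma prob_bound (P : probability T R) (w : nat -> T -> R) (beta c delta gam eps : R) (N : nat) :
  ppp_atoms_decreasing P w -> 0 < eps -> 0 < beta -> beta < 1 ->
  (0 < `|ceil ((N%:R : R) `^ gam)|)%N ->
  (`|ceil ((N%:R : R) `^ delta)| <= `|ceil ((N%:R : R) `^ gam)|)%N ->
  (`|ceil ((N%:R : R) `^ gam)| <= N)%N ->
  c^-1 * (N%:R : R) `^ (1 - beta) <
    ((1 + eps) ^+ 2 + eps)^-1 / (1 - beta) *
      (N.+1%:R `^ (1 - beta) - (`|ceil ((N%:R : R) `^ gam)|%N)%:R `^ (1 - beta)) ->
  (P (event_E w beta c delta N) <=
     (N%:R * expR (- (eps ^+ 2 * (`|ceil ((N%:R : R) `^ gam)|%N)%:R)))%:E)%E.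
Proof.
move=> Hw e0 b0 b1.
set L := `|ceil _|%N.
set a := `|ceil _|%N.
move=> L0 aL LN ineq.
have Hw' := Hw; case: Hw' => mw wpos wdec hP.
set al := (1 + eps) ^+ 2 + eps.
have al1 : 1 <= al.
  have h1 : 1 <= 1 + eps by rewrite lerDl ltW.
  have h2 : 1 <= (1 + eps) ^+ 2 by rewrite expr_ge1 // (le_trans ler01).
  rewrite /al; apply: le_trans h2 _; rewrite lerDl ltW //.
pose F k := if (L <= k.+1)%N then [set t | (w k t < al^-1 / k.+1%:R)%R] else set0.
have mF k : measurable (F k).
  rewrite /F; case: ifP => // _.
  have -> : [set t | w k t < al^-1 / k.+1%:R] = setT `&` (w k) @^-1` [set` `]-oo, al^-1 / k.+1%:R[].
    by apply/seteqP; split => t /=; rewrite in_itv /= ?andbT //; move=> [].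
  apply: (mw k) => //; exact: measurable_itv.
have mE := @event_E_meas d T R w beta c delta N mw.
have sub : event_E w beta c delta N `<=` \big[setU/set0]_(k < N) F k.
  move=> t Et; apply: contrapT => nU.
  have hv : forall i, (L <= i)%N -> (i <= N)%N -> al^-1 / i%:R <= atom w i t.
    move=> i Li iN; rewrite /atom leNgt; apply/negP => wi.
    have i0 : (0 < i)%N by apply: leq_trans Li.
    apply: nU; rewrite -bigcup_mkord; exists i.-1.
      by rewrite /=; lia.
    by rewrite /F prednK // Li.
  have := @det_bound R beta al L N (fun i => atom w i t) b0 b1 al1 L0 (leqW LN) hv.
  move=> HL.
  move: Et; rewrite /event_E /= -/a => Et.
  have Hs : \sum_(L <= i < N.+1) atom w i t `^ beta <= \sum_(a <= i < N.+1) atom w i t `^ beta.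
    rewrite (@big_cat_nat _ _ _ L a N.+1) //=; last exact: leqW.
    by rewrite lerDr sumr_ge0 // => i _; exact: powR_ge0.
  have := lt_le_trans ineq (le_trans HL (le_trans Hs Et)).
  by rewrite ltxx.
have := @content_subadditive _ _ _ P _ F N (fun n _ => mF n) mE sub.
move=> H; apply: le_trans H _.
apply: le_trans (_ : (\sum_(k < N) (expR (- (eps ^+ 2 * L%:R)))%:E <= _)%E).
  apply: lee_sum => k _; rewrite /F; case: ifP => Lk.
    apply: le_trans (@per_index d T R P w eps k Hw e0) _.
    rewrite lee_fin ler_expR lerN2 ler_wpM2l ?ler_nat //.
    by rewrite exprn_ge0 // ltW.
  by rewrite measure0 lee_fin expR_ge0.
by rewrite sumEFin sumr_const card_ord mulr_natl.
Qed.
End S11.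
Section S12.
Variable R : realType.

Lemma asym (gam kap eta e : R) : 2^-1 <= gam -> 0 < kap -> 0 < eta -> 0 < e ->
  \forall N \near \oo,
    (N%:R : R) * expR (- (kap * (N%:R : R) `^ gam)) <= e * `|(N%:R : R) `^ (- eta)|.
Proof.
move=> g2 k0 et0 e0.
have [etaM _] := @ceilnP R eta (ltW et0).
set M := `|ceil eta|%N in etaM.
set K := (2 * M + 3).+1.
set C := K`!%:R / kap ^+ K.
have C0 : 0 < C by rewrite divr_gt0 // ?ltr0n ?fact_gt0 // exprn_gt0.
near=> N.
have N1 : 1 <= (N%:R : R) by rewrite ler1n; near: N; exact: nbhs_infty_gt.
have NC : C / e <= N%:R by near: N; exact: nbhs_infty_ger.
set n := (N%:R : R) in N1 NC *.
have n0 : 0 < n by apply: lt_le_trans N1.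
have g0 : 0 <= gam by apply: le_trans g2; rewrite invr_ge0.
set z := kap * n `^ gam.
have z0 : 0 <= z by rewrite mulr_ge0 ?powR_ge0 // ltW.
have hz : z ^+ K / K`!%:R <= expR z.
  apply: le_trans (expR_ge1Dxn (2 * M + 3) z0); rewrite lerDr //.
have nK : n ^+ (M + 2) <= (n `^ gam) ^+ K.
  have e1 : (n `^ gam) ^+ K = n `^ (gam * K%:R).
    by rewrite -powR_mulrn ?powR_ge0 // powRrM.
  have e2 : n ^+ (M + 2) = n `^ (M + 2)%:R by rewrite powR_mulrn // ltW.
  rewrite e1 e2; apply: ler_powR => //.
  rewrite /K.
  have -> : ((2 * M + 3).+1%:R : R) = 2 * (M + 2)%:R.
    by rewrite -natrM; congr _%:R; lia.
  have h2 : 1 <= 2 * gam by lra.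
  have : 0 <= (M + 2)%:R :> R by [].
  nra.
have Q0 : 0 < n ^+ M by rewrite exprn_gt0.
have zK : kap ^+ K * n ^+ (M + 2) <= z ^+ K.
  by rewrite /z exprMn; apply: ler_wpM2l => //; rewrite exprn_ge0 // ltW.
have zKpos : 0 < kap ^+ K * n ^+ (M + 2) by rewrite mulr_gt0 // exprn_gt0.
have fK : 0 < K`!%:R :> R by rewrite ltr0n fact_gt0.
have ez : expR (- z) <= C / n ^+ (M + 2).
  rewrite expRN.
  have zK0 : 0 < z ^+ K / K`!%:R by rewrite divr_gt0 // (lt_le_trans zKpos).
  apply: le_trans (_ : (z ^+ K / K`!%:R)^-1 <= _).
    by rewrite lef_pV2 ?posrE ?expR_gt0.
  rewrite invf_div /C -mulrA ler_wpM2l ?ler0n // -invfM.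
  by rewrite lef_pV2 ?posrE // (lt_le_trans zKpos).
have rhs : (n ^+ M)^-1 <= `|n `^ (- eta)|.
  rewrite ger0_norm ?powR_ge0 // powRN lef_pV2 ?posrE ?powR_gt0 //.
  by rewrite -powR_mulrn ?(ltW n0) // ler_powR.
apply: le_trans (_ : n * (C / n ^+ (M + 2)) <= _).
  by apply: ler_wpM2l => //; exact: ltW.
have -> : n * (C / n ^+ (M + 2)) = (C / n) * (n ^+ M)^-1.
  by rewrite exprD; field; rewrite ?gt_eqF // exprn_gt0.
apply: le_trans (_ : e * (n ^+ M)^-1 <= _); last by rewrite ler_wpM2l // ltW.
apply: ler_wpM2r; first by rewrite invr_ge0 ltW.
by rewrite ler_pdivrMr // mulrC -ler_pdivrMr.
Unshelve. all: by end_near.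
Qed.
End S12.
Theorem lemma4p2 (d : measure_display) (T : measurableType d) (R : realType)
    (P : probability T R) (w : nat -> T -> R)
    (beta c delta : R) :
  ppp_atoms_decreasing P w ->
  0 < beta < 1 -> 1 - beta < c -> 0 <= delta < 1 ->
  forall eta : R, 0 < eta ->
    (fun N : nat => fine (P (event_E w beta c delta N)))
      =o_\oo (fun N : nat => (N%:R : R) `^ (- eta)).
Proof.
move=> Hw /andP[b0 b1] hc /andP[d0 d1] eta eta0.
have s0 : 0 < 1 - beta by rewrite subr_gt0.
have c0 : 0 < c by apply: lt_trans hc.
set q := (1 - beta) / c.
have q0 : 0 <= q by rewrite divr_ge0 ?ltW.
have q1 : q < 1 by rewrite ltr_pdivrMr // mul1r.
set eps := (1 - q) / 8.
have e0 : 0 < eps by rewrite divr_gt0 // subr_gt0.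
have hq4 : 4 * eps <= 1 - ((1 + eps) ^+ 2 + eps) * q.
  rewrite /eps.
  have : 0 <= q * (1 - q) by rewrite mulr_ge0 // subr_ge0 ltW.
  nra.
set gam := (1 + delta) / 2.
have dg : delta <= gam by rewrite /gam; lra.
have g1 : gam < 1 by rewrite /gam; lra.
have g2 : 2^-1 <= gam by rewrite /gam; lra.
have KR := @key_real R beta c delta gam eps b0 b1 c0 d0 dg g1 e0 hq4.
apply/eqoP => e epos.
have AS := @asym R gam (eps ^+ 2) eta e g2 (exprn_gt0 _ e0) eta0 epos.
near=> N.
have [L0 aL LN ineq] :
    [/\ (0 < `|ceil ((N%:R : R) `^ gam)|)%N,
        (`|ceil ((N%:R : R) `^ delta)| <= `|ceil ((N%:R : R) `^ gam)|)%N,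
        (`|ceil ((N%:R : R) `^ gam)| <= N)%N &
       c^-1 * (N%:R : R) `^ (1 - beta) <
         ((1 + eps) ^+ 2 + eps)^-1 / (1 - beta) *
           (N.+1%:R `^ (1 - beta) - (`|ceil ((N%:R : R) `^ gam)|%N)%:R `^ (1 - beta))].
  by near: N; exact: KR.
have AN : (N%:R : R) * expR (- (eps ^+ 2 * (N%:R : R) `^ gam)) <= e * `|(N%:R : R) `^ (- eta)|.
  by near: N; exact: AS.
have PB := @prob_bound d T R P w beta c delta gam eps N Hw e0 b0 b1 L0 aL LN ineq.
set E := event_E w beta c delta N in PB *.
have PE0 : (0 <= P E)%E by exact: measure_ge0.
have PEfin : P E \is a fin_num by rewrite ge0_fin_numE // (le_lt_trans PB) // ltry.
rewrite ger0_norm ?fine_ge0 //.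
apply: le_trans AN.
rewrite -lee_fin fineK //; apply: le_trans PB _; rewrite lee_fin.
apply: ler_wpM2l => //; rewrite ler_expR lerN2 ler_wpM2l ?exprn_ge0 ?(ltW e0) //.
by have [] := @ceilnP R ((N%:R : R) `^ gam) (powR_ge0 _ _).
Unshelve. all: by end_near.
Qed.
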